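(* For every NFA $\mathcal A$, the relation $S(\supseteq^{\mathrm{fw}},\subseteq^{\mathrm{fw}})$ is good for saturation, i.e. $\mathcal L(\mathrm{Sat}(\mathcal A,S(\supseteq^{\mathrm{fw}},\subseteq^{\mathrm{fw}})))=\mathcal L(\mathcal A)$.
   Context: An NFA $\mathcal A=(\Sigma,Q,I,F,\delta)$, $\delta\subseteq Q\times\Sigma\times Q$; its language is the set of finite words with a finite trace starting in $I$ and ending in $F$. Forward finite trace inclusion: $p\subseteq^{\mathrm{fw}}q$ iff for every finite word $w$, if some $w$-trace from $p$ ends in $F$ then some $w$-trace from $q$ ends in $F$; $\supseteq^{\mathrm{fw}}$ is its inverse. Let $\Delta=Q\times\Sigma\times Q$; $S(R_b,R_f)=\{((p,\sigma,r),(p',\sigma,r'))\in\Delta\times\Delta:p\,R_b\,p',\ r\,R_f\,r'\}$. For reflexive $S\subseteq\Delta\times\Delta$, $\mathrm{Sat}(\mathcal A,S)=(\Sigma,Q,I,F,\{t'\in\Delta:\exists t\in\delta,(t',t)\in S\})$. *)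

(* Defs.v *)
From mathcomp Require Import all_boot.
Set Implicit Arguments. Unset Strict Implicit. Unset Printing Implicit Defensive.

(* Components are Prop-valued so that Sat (whose transition relation is
   defined via forward trace inclusion, a property quantifying over all
   words) is again an NFA of the same kind. *)
Record NFA (Sig Q : finType) := MkNFA {
  ini : Q -> Prop;
  fin : Q -> Prop;
  delta : Q -> Sig -> Q -> Prop }.

Section NFADefs.
Variables (Sig Q : finType).

Fixpoint accepts (A : NFA Sig Q) (p : Q) (w : seq Sig) : Prop :=
  match w with
  | [::] => fin A p
  | a :: w' => exists q, delta A p a q /\ accepts A q w'
  end.

Definition lang (A : NFA Sig Q) (w : seq Sig) : Prop :=
  exists p, ini A p /\ accepts A p w.

Definition fw_incl (A : NFA Sig Q) (p q : Q) : Prop :=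
  forall w, accepts A p w -> accepts A q w.
Definition fw_sup (A : NFA Sig Q) (p q : Q) : Prop := fw_incl A q p.

(* Transitions Delta = Q x Sigma x Q, encoded as ((p, sigma), r). *)
Definition transition := (Q * Sig * Q)%type.

Definition S_rel (Rb Rf : Q -> Q -> Prop) (t t' : transition) : Prop :=
  t.1.2 = t'.1.2 /\ Rb t.1.1 t'.1.1 /\ Rf t.2 t'.2.

Definition Sat (A : NFA Sig Q) (S : transition -> transition -> Prop) : NFA Sig Q :=
  MkNFA (ini A) (fin A)
    (fun p s r => exists t : transition,
        delta A t.1.1 t.1.2 t.2 /\ S (p, s, r) t).

End NFADefs.

(* Main.v *)
Require Import Defs.
From mathcomp Require Import all_boot.

Lemma sat_sound (Sig Q : finType) (A : NFA Sig Q) (w : seq Sig) :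
  forall p, accepts (Sat A (S_rel (fw_sup A) (fw_incl A))) p w -> accepts A p w.
Proof.
elim: w => [|a w IH] p /=; first by [].
move=> [r [[[[p' s] r'] [Hd [Hs [Hb Hf]]]] Hr]].
simpl in *. subst s.
rewrite /fw_sup /fw_incl in Hb. apply: (Hb (a :: w)) => /=. exists r'. split; first exact: Hd.
by apply: Hf; apply: IH.
Qed.

Lemma sat_complete (Sig Q : finType) (A : NFA Sig Q) (w : seq Sig) :
  forall p, accepts A p w -> accepts (Sat A (S_rel (fw_sup A) (fw_incl A))) p w.
Proof.
elim: w => [|a w IH] p /=; first by [].
move=> [r [Hd Hr]]. exists r. split; last exact: IH.
exists (p, a, r). split; first exact: Hd.
by split; [|split]; rewrite /fw_sup /fw_incl.
Qed.

Theorem theorem10p7 (Sig Q : finType) (A : NFA Sig Q) :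
  forall w : seq Sig,
    lang (Sat A (S_rel (fw_sup A) (fw_incl A))) w <-> lang A w.
Proof.
move=> w; split => -[p [Hi Ha]]; exists p; split => //.
- exact: sat_sound.
- exact: sat_complete.
Qed.
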